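(* Inside the quotient field $Q(\mathbb{Z}[q]^{\mathbb{N}})$ one has $$\mathbb{Z}[q]^{\mathbb{N}}\cap\mathbb{Z}[q,q^{-1}][\Phi_{\mathbb{N}}^{-1}]=\mathbb{Z}[q,q^{-1}].$$
   Context: $q$ is an indeterminate, $\Phi_n(q)$ the $n$th cyclotomic polynomial, and $\Phi_{\mathbb{N}}^*$ the multiplicative subset of $\mathbb{Z}[q]$ generated by all $\Phi_n(q)$, $n\in\mathbb{N}$. $\mathbb{Z}[q]^{\mathbb{N}}=\varprojlim_{f\in\Phi_{\mathbb{N}}^*}\mathbb{Z}[q]/(f)$; it is an integral domain in which $q$ is invertible, and the natural map $\mathbb{Z}[q,q^{-1}]\to\mathbb{Z}[q]^{\mathbb{N}}$ is injective, so $\mathbb{Q}(q)\subset Q(\mathbb{Z}[q]^{\mathbb{N}})$, where $Q(\cdot)$ denotes the quotient field. $\mathbb{Z}[q,q^{-1}][\Phi_{\mathbb{N}}^{-1}]$ is the subring of $\mathbb{Q}(q)$ of fractions $f/g$ with $f\in\mathbb{Z}[q,q^{-1}]$, $g\in\Phi_{\mathbb{N}}^*$. *)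

(* Defs.v *)
From mathcomp Require Import all_boot all_order all_algebra all_field.
Set Implicit Arguments. Unset Strict Implicit. Unset Printing Implicit Defensive.
Import GRing.Theory.
Local Open Scope ring_scope.

(* Divisibility in Z[q] (genuine, not pseudo-divisibility). *)
Definition zdvd (f a : {poly int}) : Prop := exists r : {poly int}, a = r * f.

Definition zcong (f a b : {poly int}) : Prop := zdvd f (a - b).

Definition inPhiStar (f : {poly int}) : Prop :=
  exists s : seq nat, all (fun n => (0 < n)%N) s /\ f = \prod_(n <- s) 'Phi_n.

(* An element of Z[q]^N = lim_{f in Phi_N^*} Z[q]/(f) is represented by a
   compatible family x : f |-> x f (a representative of its component in
   Z[q]/(f)); two families represent the same element iff they agree
   modulo every f in Phi_N^*. *)
Definition compatible (x : {poly int} -> {poly int}) : Prop :=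
  forall f g, inPhiStar f -> inPhiStar g -> zdvd g f -> zcong g (x f) (x g).

Definition ZqN_eq (x y : {poly int} -> {poly int}) : Prop :=
  forall f, inPhiStar f -> zcong f (x f) (y f).

(* The Laurent polynomial p * q^{-k} in Z[q,q^{-1}], seen in Z[q]^N:
   x equals its image iff q^k * x = p in every Z[q]/(f)
   (q is a unit in each Z[q]/(f), f in Phi_N^* ). *)
Definition is_laurent_image (x : {poly int} -> {poly int}) (p : {poly int}) (k : nat) : Prop :=
  forall f, inPhiStar f -> zcong f ('X ^+ k * x f) p.

Definition ZqN_scale (g : {poly int}) (x : {poly int} -> {poly int}) :=
  fun f => g * x f.

(* Main.v *)
Require Import Defs.
From mathcomp Require Import all_boot all_order all_algebra all_field.
From mathcomp Require Import ring.
Local Open Scope ring_scope.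
Import GRing.Theory.

Lemma alg (R: idomainType) (X xg xfg xf p g f r r2 r3 : R) : g != 0 ->
  X*(g*xg) - p = r*(g*g) -> X*(g*xfg) - p = r2*(f*g) -> xfg - xf = r3*f ->
  X*xf - (X*xg - r*g) = (r2 - X*r3)*f.
Proof.
move=> g0 H1 H2 H3.
have E : g * ((X*xfg - (X*xg - r*g)) - r2*f) = 0.
  have -> : g * ((X*xfg - (X*xg - r*g)) - r2*f) = (X*(g*xfg) - p - r2*(f*g)) - (X*(g*xg) - p - r*(g*g)) by ring.
  by rewrite H1 H2 !subrr.
move/eqP: E; rewrite mulf_eq0 (negPf g0) /= subr_eq0 => /eqP E.
have -> : X*xf - (X*xg - r*g) = (X*xfg - (X*xg - r*g)) - X*(xfg - xf) by ring.
by rewrite E H3; ring.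
Qed.

Lemma inPhiStarM f g : inPhiStar f -> inPhiStar g -> inPhiStar (f * g).
Proof.
move=> [s [Hs ->]] [t [Ht ->]]; exists (s ++ t); split.
  by rewrite all_cat Hs Ht.
by rewrite big_cat.
Qed.

Lemma inPhiStar_neq0 g : inPhiStar g -> g != 0.
Proof.
move=> [s [_ ->]]; apply: monic_neq0; apply: monic_prod => i _.
exact: Cyclotomic_monic.
Qed.

Theorem proposition7p5 :
  forall (x : {poly int} -> {poly int}), compatible x ->
  forall (p g : {poly int}) (k : nat), inPhiStar g ->
    is_laurent_image (ZqN_scale g x) p k ->
  exists (p' : {poly int}) (k' : nat), is_laurent_image x p' k'.
Proof.
move=> x Hc p g k Hg H.
have Hgg := @inPhiStarM g g Hg Hg.
have [r Hr] := H _ Hgg.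
rewrite /ZqN_scale in Hr.
exists ('X ^+ k * x (g * g) - r * g), k => f Hf.
have Hfg := @inPhiStarM f g Hf Hg.
have [r2 Hr2] := H _ Hfg; rewrite /ZqN_scale in Hr2.
have [r3 Hr3] : zcong f (x (f * g)) (x f).
  apply: Hc => //; by exists g; rewrite mulrC.
exists (r2 - 'X ^+ k * r3).
exact: (@alg _ ('X ^+ k) (x (g * g)) (x (f * g)) (x f) p g f r r2 r3 (@inPhiStar_neq0 g Hg) Hr Hr2 Hr3).
Qed.
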